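(* There exists a sequence $S\in\{0,1\}^\omega$ which is FS-deep but not LZ-deep.
   Context: $S\upharpoonright n$ is the length-$n$ prefix of $S$. A finite-state transducer (FST) is $T=(Q,q_0,\delta,\nu)$ with finite state set $Q$, start state $q_0$, $\delta:Q\times\{0,1\}\to Q$, $\nu:Q\times\{0,1\}\to\{0,1\}^*$; $T(\lambda)=\lambda$, $T(xb)=T(x)\nu(\hat\delta(x),b)$; $T$ is an ILFST if $x\mapsto(T(x),\hat\delta(x))$ is injective. FSTs are described by the following fixed binary representation. For $n\ge1$, $\mathrm{bin}(n)$ is the binary representation of $n$ and $\mathrm{string}(n)$ is $\mathrm{bin}(n)$ without its leading 1. For $x=x_1\cdots x_l$, $x^\dagger=x_10x_20\cdots x_{l-1}0x_l1$, $x^\diamond=\overline{(1x)^\dagger}$ (bitwise complement), $d(x)=x_1x_1\cdots x_lx_l$. For an FST with states $q_1,\dots,q_m$, write for $t=2i-1+b$: $(\delta(q_i,b),\nu(q_i,b))=(q_{1+(n_t\bmod m)},\mathrm{string}(n'_t))$; the table is encoded as $\pi=\mathrm{bin}(n_1)^\ddagger\mathrm{string}(n'_1)^\diamond\cdots\mathrm{bin}(n_{2m})^\ddagger\mathrm{string}(n'_{2m})^\diamond$, where $\mathrm{bin}(n_t)^\ddagger$ is empty for a self-loop and $\mathrm{bin}(n_t)^\dagger$ otherwise; $d(\mathrm{bin}(i))01\pi$ describes that FST with start state $q_i$. $|T|$ is the shortest description length, $\mathrm{FST}^{\le k}=\{T:|T|\le k\}$, and $D^k(x)=\min\{|y|:T\in\mathrm{FST}^{\le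 k},T(y)=x\}$. $S$ is FS-deep (infinitely often finite-state deep) if there is $\alpha>0$ such that for every $k$ there is $k'$ with $D^k(S\upharpoonright n)-D^{k'}(S\upharpoonright n)\ge\alpha n$ for infinitely many $n$. LZ denotes the Lempel–Ziv 78 compressor: it parses $x=x_1\cdots x_n$ into phrases, each distinct from all earlier ones (except possibly the last), with $x_i=x_{l(i)}b_i$, $l(i)<i$, $b_i\in\{0,1\}$, $x_0=\lambda$; it outputs $c_{l(1)}b_1\cdots c_{l(n)}b_n$ with $c_j$ a prefix-free encoding of index $j$. $S$ is LZ-deep if there is $\alpha>0$ such that for every ILFST $C$, $|C(S\upharpoonright n)|-|\mathrm{LZ}(S\upharpoonright n)|\ge\alpha n$ for all but finitely many $n$. *)

(* Defs.v *)
From Stdlib Require Import Reals.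
From mathcomp Require Import all_boot.

Set Implicit Arguments.
Unset Strict Implicit.
Unset Printing Implicit Defensive.

(* An FST with m = fst_n.+1 states q_1..q_m, represented by 'I_m
   (state q_i is the ordinal i-1). *)
Record FST := mkFST {
  fst_n : nat;
  fst_start : 'I_fst_n.+1;
  fst_delta : 'I_fst_n.+1 -> bool -> 'I_fst_n.+1;
  fst_nu : 'I_fst_n.+1 -> bool -> seq bool }.

Fixpoint fst_out_from (T : FST) (q : 'I_(fst_n T).+1) (x : seq bool)
  : seq bool :=
  match x with
  | [::] => [::]
  | b :: x' => fst_nu q b ++ fst_out_from (fst_delta q b) x'
  end.

Fixpoint fst_state_from (T : FST) (q : 'I_(fst_n T).+1) (x : seq bool)
  : 'I_(fst_n T).+1 :=
  match x with
  | [::] => q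
  | b :: x' => fst_state_from (fst_delta q b) x'
  end.

Definition fst_out (T : FST) (x : seq bool) : seq bool :=
  fst_out_from (fst_start T) x.

Definition fst_state (T : FST) (x : seq bool) : 'I_(fst_n T).+1 :=
  fst_state_from (fst_start T) x.

Definition ILFST (T : FST) : Prop :=
  forall x y : seq bool,
    fst_out T x = fst_out T y -> fst_state T x = fst_state T y -> x = y.

Fixpoint bin_aux (fuel n : nat) : seq bool :=
  match fuel with
  | 0 => [::]
  | f.+1 => if n is 0 then [::] else rcons (bin_aux f n./2) (odd n)
  end.

(* bin n : binary representation of n >= 1 (most significant bit first) *)
Definition bin (n : nat) : seq bool := bin_aux n n.

Definition bstring (n : nat) : seq bool := behead (bin n).

Fixpoint dagger (x : seq bool) : seq bool :=
  match x with
  | [::] => [::]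
  | [:: b] => [:: b; true]
  | b :: x' => b :: false :: dagger x'
  end.

Definition diamond (x : seq bool) : seq bool := map negb (dagger (true :: x)).

Definition dbl (x : seq bool) : seq bool := flatten (map (fun b => [:: b; b]) x).

(* encoding of the table entry t = 2i-1+b, given the chosen number n_t;
   string(n'_t) = nu(q_i,b), so string(n'_t)^diamond = (nu(q_i,b))^diamond *)
Definition enc_entry (T : FST) (ns : 'I_(fst_n T).+1 -> bool -> nat)
    (q : 'I_(fst_n T).+1) (b : bool) : seq bool :=
  (if fst_delta q b == q then [::] else dagger (bin (ns q b)))
    ++ diamond (fst_nu q b).

(* p is a description of T: p = d(bin(i)) 01 pi, where q_i is the start
   state and pi is the table encoding for some admissible choice of the
   numbers n_t (n_t >= 1, q_{1 + (n_t mod m)} = delta(q_i,b)). *)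
Definition describes (p : seq bool) (T : FST) : Prop :=
  exists ns : 'I_(fst_n T).+1 -> bool -> nat,
    (forall q b, fst_delta q b != q ->
        0 < ns q b /\ ns q b %% (fst_n T).+1 = nat_of_ord (fst_delta q b)) /\
    p = dbl (bin (nat_of_ord (fst_start T)).+1) ++ [:: false; true] ++
        flatten [seq enc_entry ns q b | q <- enum 'I_(fst_n T).+1,
                                        b <- [:: false; true]].

Definition FST_le (k : nat) (T : FST) : Prop :=
  exists p, describes p T /\ size p <= k.

(* d = D^k(x)  (D^k(x) is undefined, i.e. infinite, if no such d exists) *)
Definition Dk_is (k : nat) (x : seq bool) (d : nat) : Prop :=
  (exists T y, FST_le k T /\ fst_out T y = x /\ size y = d) /\
  (forall T y, FST_le k T -> fst_out T y = x -> d <= size y).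

(* D^k(x) - D^{k'}(x) >= a, with the convention D = +infinity when
   no description exists. *)
Definition Dgap (k k' : nat) (x : seq bool) (a : R) : Prop :=
  exists d', Dk_is k' x d' /\
    forall d, Dk_is k x d -> Rle a (Rminus (INR d) (INR d')).

Definition prefix (S : nat -> bool) (n : nat) : seq bool := mkseq S n.

Definition FS_deep (S : nat -> bool) : Prop :=
  exists alpha : R, Rlt 0 alpha /\
    forall k, exists k', forall N, exists n, N <= n /\
      Dgap k k' (prefix S n) (Rmult alpha (INR n)).

(* dict = [:: x_0 = lambda; x_1; ...]. Each step takes the shortest
   nonempty prefix of the remaining input not in dict (or the whole
   remaining input if there is none: last phrase), and emits
   (l, b) with phrase = x_l b. *)
Fixpoint lz_aux (fuel : nat) (dict : seq (seq bool)) (x : seq bool)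
  : seq (nat * bool) :=
  match fuel with
  | 0 => [::]
  | f.+1 =>
    if x is [::] then [::] else
    let k := find (fun i => take i.+1 x \notin dict) (iota 0 (size x)) in
    let len := minn k.+1 (size x) in
    (index (take len.-1 x) dict, nth false x len.-1)
      :: lz_aux f (rcons dict (take len x)) (drop len x)
  end.

Definition lz_phrases (x : seq bool) : seq (nat * bool) :=
  lz_aux (size x) [:: [::]] x.

Definition lz_code (j : nat) : seq bool := dagger (bin j.+1).

Definition LZ (x : seq bool) : seq bool :=
  flatten [seq lz_code lb.1 ++ [:: lb.2] | lb <- lz_phrases x].

Definition LZ_deep (S : nat -> bool) : Prop :=
  exists alpha : R, Rlt 0 alpha /\
    forall C : FST, ILFST C ->
      exists N, forall n, N <= n ->
        Rle (Rmult alpha (INR n))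
            (Rminus (INR (size (fst_out C (prefix S n))))
                    (INR (size (LZ (prefix S n))))).

(* Main.v *)
Require Import Defs.
From Stdlib Require Import Reals Lra Classical.
From mathcomp Require Import all_boot.
From mathcomp Require Import zify.
Set Implicit Arguments.
Unset Strict Implicit.
Unset Printing Implicit Defensive.



Lemma infix_lemma (P Q R a x t : seq bool) : P ++ Q ++ R = a ++ x ++ t ->
  size P <= size a -> size a + size x <= size P + size Q ->
  take (size x) (drop (size a - size P) Q) = x.
Proof.
move=> e h1 h2.
have := f_equal (drop (size a)) e.
rewrite (@drop_size_cat _ _ a (x ++ t) erefl) drop_cat ltnNge h1 /= drop_cat.
case: ifP => h3.
  move=> e2; have := f_equal (take (size x)) e2.
  rewrite (@take_size_cat _ _ x t erefl) takel_cat // size_drop; lia.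
move=> _; have /size0nil -> : size x = 0 by lia. by rewrite take0.
Qed.

Section Run.
Variable T : FST.

Lemma out_cat (q : 'I_(fst_n T).+1) y1 y2 :
  fst_out_from q (y1 ++ y2) = fst_out_from q y1 ++ fst_out_from (fst_state_from q y1) y2.
Proof. by elim: y1 q => [|b y IH] q //=; rewrite IH catA. Qed.

Lemma split_out y (q : 'I_(fst_n T).+1) A : exists y1 y2, y = y1 ++ y2 /\
  size (fst_out_from q y1) <= A /\
  (y2 = [::] \/ A < size (fst_out_from q (y1 ++ take 1 y2))).
Proof.
elim: y q A => [|b y IH] q A; first by exists [::], [::]; split => //; split => //; left.
case: (ltnP A (size (fst_nu q b))) => hA.
  exists [::], (b :: y); split => //; split => //; right => /=.
  rewrite /= take0 size_cat; lia.
have [y1 [y2 [-> [h1 h2]]]] := IH (fst_delta q b) (A - size (fst_nu q b)).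
exists (b :: y1), y2; split => //=; split.
  rewrite size_cat; lia.
case: h2 => [->|h2]; [by left | right]; rewrite size_cat; lia.
Qed.

Variable x : seq bool.
Variable H : nat.
Hypothesis hard : forall (q : 'I_(fst_n T).+1) z off, size z <= H ->
  take (size x) (drop off (fst_out_from q z)) != x.

Lemma hard_lower M : forall (q : 'I_(fst_n T).+1) y a c y1 y2,
  fst_out_from q y = a ++ flatten (nseq M x) ++ c -> y = y1 ++ y2 ->
  size (fst_out_from q y1) <= size a -> M * H <= size y2.
Proof.
elim: M => [|M IH] q y a c y1 y2 hy e1 h1; first by [].
have hy' : fst_out_from q y = (a ++ x) ++ flatten (nseq M x) ++ c by rewrite hy /= !catA.
have [y1' [y2' [e2 [h3 h4]]]] := split_out y q (size (a ++ x)).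
have le12 : size y1 <= size y1'.
  case: (leqP (size y1) (size y1')) => // lt.
  exfalso. case: h4 => h4.
    by move: e1 e2 lt; rewrite h4 cats0 => -> /(f_equal size); rewrite size_cat; lia.
  have pre : y1 = (y1' ++ take 1 y2') ++ drop (size y1' + 1) y1.
    rewrite -{1}(cat_take_drop (size y1' + 1) y1); congr (_ ++ _).
    have := f_equal (take (size y1' + 1)) e1; rewrite takel_cat; last by lia.
    by move=> <-; rewrite e2 take_cat ltnNge leq_addr /= addKn.
  rewrite size_cat in h4; move: h1; rewrite {1}pre out_cat size_cat; lia.
set m := drop (size y1) y1'.
have ey1' : y1' = y1 ++ m.
  have := f_equal (take (size y1)) e1; rewrite take_size_cat // e2 takel_cat // => e3.
  by rewrite /m -{1}(cat_take_drop (size y1) y1') e3.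
have ey2 : y2 = m ++ y2'.
  have := f_equal (drop (size y1)) e1; rewrite drop_size_cat // e2 ey1' -catA.
  by rewrite drop_size_cat.
have := IH q y (a ++ x) c y1' y2' hy' e2 h3 => IH'.
rewrite ey2 size_cat mulSn.
clearbody m.
case: (leqP H (size m)) => hm; first by lia.
exfalso.
set seg := m ++ take 1 y2'.
have hseg : size seg <= H.
  by rewrite /seg size_cat size_take; case: ifP; lia.
have ey : y = (y1 ++ seg) ++ drop 1 y2' by rewrite e2 ey1' /seg -!catA cat_take_drop.
have hsz : size (a ++ x) <= size (fst_out_from q (y1 ++ seg)).
  case: h4 => h4.
    move: ey; rewrite /seg h4 /= cats0 => <-; rewrite hy' !size_cat; lia.
  by move: h4; rewrite /seg ey1' -catA; lia.
have := hard (fst_state_from q y1) (size a - size (fst_out_from q y1)) hseg.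
move: hy'; rewrite ey out_cat out_cat -!catA => hy2.
rewrite (infix_lemma hy2 h1) ?eqxx //.
by move: hsz; rewrite out_cat !size_cat.
Qed.
End Run.



Lemma size_dagger s : size (dagger s) = (size s).*2.
Proof.
elim: s => [|b s IH] //=; case: s IH => [|c s] IH //=.
by rewrite IH /=; lia.
Qed.

Lemma size_flatten_mem (ss : seq (seq bool)) s : s \in ss -> size s <= size (flatten ss).
Proof.
elim: ss => [|t ss IH] //=; rewrite inE size_cat => /orP [/eqP ->|/IH h]; [exact: leq_addr | exact: leq_trans h (leq_addl _ _)].
Qed.

Lemma size_flatten_ge (ss : seq (seq bool)) : all (fun s => 0 < size s) ss -> size ss <= size (flatten ss).
Proof. elim: ss => [|t ss IH] //= /andP [h1 /IH]; rewrite size_cat; lia. Qed.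

Lemma FST_le_bound k T : FST_le k T ->
  (fst_n T).+1 <= k /\ forall q b, size (@fst_nu T q b) < k.
Proof.
move=> [p [[ns [_ ->]] hk]].
move: hk; set ss := [seq enc_entry ns q b | q <- enum 'I_(fst_n T).+1, b <- [:: false; true]] => hk.
have hsz : size (flatten ss) <= k by move: hk; rewrite !size_cat; lia.
have hent q b : size (fst_nu q b) < size (enc_entry ns q b).
  by rewrite /enc_entry size_cat /diamond size_map size_dagger /=; lia.
have hmem q b : enc_entry ns q b \in ss by apply: allpairs_f; rewrite ?mem_enum ?inE; case: b.
split.
  have : size ss <= size (flatten ss).
    apply: size_flatten_ge; apply/allP => s /allpairsP [[q b] [_ _ ->]] /=.
    have := hent q b; lia.
  rewrite size_allpairs size_enum_ord /=; lia.
move=> q b; apply: leq_trans (hent q b) _; exact: leq_trans (size_flatten_mem (hmem q b)) hsz.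
Qed.

Lemma out_size_bound k T (q : 'I_(fst_n T).+1) z :
  (forall q b, size (@fst_nu T q b) < k) -> size (fst_out_from q z) <= k * size z.
Proof.
move=> h; elim: z q => [|b z IH] q //=; rewrite size_cat.
have := h q b; have := IH (fst_delta q b); lia.
Qed.

Fixpoint runOut (tab : seq (nat * seq bool)) (q : nat) (z : seq bool) : seq bool :=
  match z with
  | [::] => [::]
  | b :: z' => (nth (0, [::]) tab (b + q.*2)).2 ++ runOut tab (nth (0, [::]) tab (b + q.*2)).1 z'
  end.

Definition tabOf (T : FST) : seq (nat * seq bool) :=
  mkseq (fun i => (nat_of_ord (fst_delta (inord i./2 : 'I_(fst_n T).+1) (odd i)),
                   fst_nu (inord i./2 : 'I_(fst_n T).+1) (odd i))) ((fst_n T).+1.*2).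

Lemma runOut_tabOf T (q : 'I_(fst_n T).+1) z : runOut (tabOf T) q z = fst_out_from q z.
Proof.
elim: z q => [|b z IH] q //=.
rewrite /tabOf nth_mkseq; last by have := ltn_ord q; case: b; lia.
by rewrite half_bit_double oddD odd_double addbF oddb inord_val /= IH.
Qed.

Definition allbits n : seq (seq bool) := map (@tval n bool) (enum {: n.-tuple bool}).

Lemma allbits_size n : size (allbits n) = 2 ^ n.
Proof. by rewrite size_map -cardE card_tuple card_bool. Qed.

Lemma allbits_uniq n : uniq (allbits n).
Proof. rewrite map_inj_uniq ?enum_uniq //; exact: val_inj. Qed.

Lemma allbits_mem n s : size s = n -> s \in allbits n.
Proof.
move=> h; apply/mapP; have h' : size s == n by apply/eqP.
by exists (Tuple h'); rewrite ?mem_enum.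
Qed.

Lemma allbits_mem_size n s : s \in allbits n -> size s = n.
Proof. by move/mapP => [t _ ->]; rewrite size_tuple. Qed.

Fixpoint allStrLe H : seq (seq bool) :=
  match H with 0 => allbits 0 | H'.+1 => allStrLe H' ++ allbits H'.+1 end.

Lemma allStrLe_mem H s : size s <= H -> s \in allStrLe H.
Proof.
elim: H => [|H IH] /=; first by move=> h; apply: allbits_mem; move: h; case: s.
rewrite mem_cat leq_eqVlt => /orP [/eqP h|h].
  by rewrite allbits_mem ?orbT.
by rewrite IH.
Qed.

Lemma allStrLe_size H : size (allStrLe H) < 2 ^ H.+1.
Proof.
elim: H => [|H IH] /=; first by rewrite allbits_size.
rewrite size_cat allbits_size expnS expnS; move: IH; rewrite expnS; lia.
Qed.

Fixpoint allSeqs (E : seq (nat * seq bool)) n : seq (seq (nat * seq bool)) :=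
  match n with 0 => [:: [::]] | n'.+1 => [seq e :: s | e <- E, s <- allSeqs E n'] end.

Lemma allSeqs_mem E s : all (mem E) s -> s \in allSeqs E (size s).
Proof.
elim: s => [|e s IH] //= /andP [he hs]; exact: allpairs_f (IH hs).
Qed.

Definition entries K := [seq (q, w) | q <- iota 0 K, w <- allStrLe K].
Definition allTabs K := flatten [seq allSeqs (entries K) m.*2 | m <- iota 0 K.+1].

Lemma tabOf_mem K T : FST_le K T -> tabOf T \in allTabs K.
Proof.
move=> /FST_le_bound [h1 h2].
apply/flattenP; exists (allSeqs (entries K) (fst_n T).+1.*2).
  apply/mapP; exists (fst_n T).+1 => //; rewrite mem_iota; lia.
have -> : (fst_n T).+1.*2 = size (tabOf T) by rewrite size_mkseq.
apply: allSeqs_mem; apply/allP => e /mapP [i _ ->].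
apply: allpairs_f.
  by rewrite mem_iota add0n leq0n /=; exact: leq_trans (ltn_ord _) h1.
by apply: allStrLe_mem; exact: ltnW (h2 _ _).
Qed.

Definition triples K H := [seq (tab, qz) | tab <- allTabs K,
                           qz <- [seq (q, z) | q <- iota 0 K, z <- allStrLe H]].
Definition bad K H := [seq take H.*2 (drop p.2 (runOut p.1.1 p.1.2.1 p.1.2.2))
                       | p <- [seq (t, off) | t <- triples K H, off <- iota 0 (K * H).+1]].

Definition hardH K := 4 * (2 * size (allTabs K) * K * K.+1).+1.

Lemma bad_size K H : size (bad K H) = size (allTabs K) * (K * size (allStrLe H)) * (K * H).+1.
Proof. by rewrite size_map !size_allpairs !size_iota. Qed.

Lemma hardH_ok K : size (bad K (hardH K)) < 2 ^ (hardH K).*2.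
Proof.
rewrite bad_size.
have hH : hardH K = 4 * (2 * (size (allTabs K) * K * K.+1)).+1 by rewrite /hardH; lia.
set C := size (allTabs K) in hH *.
set H := hardH K in hH *.
set D := C * K * K.+1 in hH.
have hA : exists A, A = (2 * D).+1 by eexists.
case: hA => A hA.
rewrite -hA in hH.
have hs := allStrLe_size H.
set s := size (allStrLe H) in hs *.
have hQ : 2 * A < 2 ^ (2 * A) by apply: ltn_expl.
set Q := 2 ^ (2 * A) in hQ.
have hP : 2 ^ H = Q * Q by rewrite hH /Q -expnD; congr (_ ^ _); lia.
have e2 : 2 ^ H.*2 = 2 ^ H * 2 ^ H by rewrite -expnD addnn.
rewrite e2 hP; rewrite expnS hP in hs.
set X := Q * Q in hs *.
have hD : D = C * K * K.+1 by [].
have hX : X = Q * Q by [].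
clearbody X D s C.
have hH1 : 0 < H by lia.
have s1 : C * (K * s) * (K * H).+1 <= D * s * H.
  rewrite hD (_ : C * K * K.+1 * s * H = C * (K * s) * (K.+1 * H)); last by lia.
  apply: leq_mul => //; lia.
have s2 : D * s * H <= D * (2 * X) * H by apply: leq_mul => //; apply: leq_mul => //; lia.
have s3 : D * (2 * X) * H < A * H * X.
  rewrite hA (_ : D * (2 * X) * H = (2 * D) * (H * X)); last by lia.
  rewrite (_ : (2 * D).+1 * H * X = (2 * D).+1 * (H * X)); last by lia.
  have hQ0 : 0 < Q by lia.
  have hp : 0 < H * X by rewrite muln_gt0 hH1 hX muln_gt0 hQ0.
  by rewrite ltn_pmul2r.
have s4 : A * H * X <= X * X.
  apply: leq_mul => //. rewrite hX hH.
  have : (2 * A) * (2 * A) <= Q * Q by apply: leq_mul; lia.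
  lia.
lia.
Qed.

Definition xk K : seq bool :=
  nth [::] (allbits (hardH K).*2) (find (fun s => s \notin bad K (hardH K)) (allbits (hardH K).*2)).

Lemma xk_prop K : size (xk K) = (hardH K).*2 /\ xk K \notin bad K (hardH K).
Proof.
set H := hardH K.
have hh : has (fun s => s \notin bad K H) (allbits H.*2).
  apply/negPn/negP => /hasPn hn.
  have : size (allbits H.*2) <= size (bad K H).
    apply: uniq_leq_size; first exact: allbits_uniq.
    by move=> s /hn; rewrite negbK.
  by rewrite allbits_size leqNgt hardH_ok.
split.
  by apply: allbits_mem_size; apply: mem_nth; rewrite -has_find.
exact: (nth_find [::] hh).
Qed.

Lemma xk_hard K T : FST_le K T -> forall (q : 'I_(fst_n T).+1) z off,
  size z <= hardH K -> take (size (xk K)) (drop off (fst_out_from q z)) != xk K.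
Proof.
move=> hT q z off hz.
have [hs hn] := xk_prop K.
have [h1 h2] := FST_le_bound hT.
case: (leqP off (K * hardH K)) => hoff.
  apply/negP => /eqP e; move/negP: hn; apply.
  rewrite -e hs -runOut_tabOf.
  apply/mapP; exists ((tabOf T, (nat_of_ord q, z)), off) => //.
  apply: allpairs_f; last by rewrite mem_iota; lia.
  apply: allpairs_f; first exact: tabOf_mem.
  apply: allpairs_f; last exact: allStrLe_mem.
  by rewrite mem_iota add0n leq0n /=; exact: leq_trans (ltn_ord _) h1.
have hb := out_size_bound q z h2.
rewrite drop_oversize; last by apply: leq_trans hb _; apply: ltnW; apply: leq_ltn_trans _ hoff; apply: leq_mul.
rewrite hs; apply/eqP => e; move: hs; rewrite -e /hardH; done.
Qed.



Lemma catl_cancel (s a b : seq bool) : s ++ a = s ++ b -> a = b.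
Proof. by move/(f_equal (drop (size s))); rewrite !drop_size_cat. Qed.

Lemma nseq_true_neq i j (r1 r2 : seq bool) : j < i ->
  nseq j false ++ true :: r1 <> nseq i false ++ true :: r2.
Proof.
move=> h e; have := f_equal (fun s => nth false s j) e.
by rewrite !nth_cat !size_nseq ltnn subnn /= h nth_nseq h.
Qed.

Section Zero.
Variable p : nat.
Definition zdelta (q : 'I_p.+1) (b : bool) : 'I_p.+1 :=
  if b then ord0 else if nat_of_ord q == p then ord0 else inord q.+1.
Definition znu (q : 'I_p.+1) (b : bool) : seq bool :=
  if b then true :: (nseq q false ++ [:: true])
  else if nat_of_ord q == p then [:: false] else [::].
Definition zC := @mkFST p ord0 zdelta znu.

Lemma zinc (q : 'I_p.+1) : nat_of_ord q != p -> nat_of_ord (inord q.+1 : 'I_p.+1) = q.+1.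
Proof. by move=> h; rewrite inordK //; have := ltn_ord q; lia. Qed.

Lemma Z1 y (q : 'I_p.+1) : @fst_out_from zC q y = [::] ->
  nat_of_ord (@fst_state_from zC q y) = q + size y.
Proof.
elim: y q => [|b y IH] q /=; first by rewrite addn0.
rewrite /znu /zdelta; case: b => //=.
case: eqP => // hq /= /IH ->; rewrite zinc; [lia | by apply/eqP].
Qed.

Lemma Z2 z (q : 'I_p.+1) t : @fst_out_from zC q z = true :: t ->
  exists i r, q <= i /\ t = nseq i false ++ true :: r.
Proof.
elim: z q t => [|b z IH] q t //=.
rewrite /znu /zdelta; case: b => /=.
  by move=> [<-]; eexists; eexists; split; [exact: leqnn | rewrite -catA].
case: eqP => // hq /= /IH [i [r [h1 h2]]]; exists i, r; split => //.
move: h1; rewrite zinc; [lia | by apply/eqP].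
Qed.

Lemma zIL_gen x y (q : 'I_p.+1) : @fst_out_from zC q x = @fst_out_from zC q y ->
  @fst_state_from zC q x = @fst_state_from zC q y -> x = y.
Proof.
elim: x y q => [|a x IH] [|b y] q //.
- move=> /esym e /(f_equal (@nat_of_ord _)) /=.
  by rewrite (Z1 e) /=; lia.
- move=> e /(f_equal (@nat_of_ord _)) /=.
  by rewrite (Z1 e) /=; lia.
case: (eqVneq a b) => [<-|hab] /=.
  by move=> /catl_cancel e1 e2; rewrite (IH _ _ e1 e2).
have key : forall (x y : seq bool) (q : 'I_p.+1),
    znu q false ++ @fst_out_from zC (zdelta q false) x <>
    znu q true ++ @fst_out_from zC (zdelta q true) y.
  move=> x' y' q' /=; rewrite /znu /=.
  case: eqP => hq //=.
  move=> /Z2 [i [r [h1 h2]]]; move: h2.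
  rewrite -catA /=; apply/nseq_true_neq.
  by move: h1; rewrite /zdelta /= zinc; [lia | apply/eqP].
move: hab; case: a; case: b => // _ e _.
  by exfalso; apply: (key y x q); rewrite e.
by exfalso; apply: (key x y q); rewrite e.
Qed.

Lemma zIL : ILFST zC.
Proof. move=> x y; exact: zIL_gen. Qed.

Lemma Zb1 z (q : 'I_p.+1) : size (@fst_out_from zC q z) <= 2 * size z + 2 * q.
Proof.
elim: z q => [|b z IH] q //=; rewrite size_cat /znu /zdelta.
case: b => /=.
  have := IH ord0; rewrite size_cat size_nseq /=; lia.
case: eqP => hq /=.
  have := IH ord0; rewrite /=; lia.
have := IH (inord q.+1); rewrite zinc; [lia | by apply/eqP].
Qed.

Lemma Zb2 Z (q : 'I_p.+1) : p.+1 * size (@fst_out_from zC q (nseq Z false)) <= q + Z.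
Proof.
elim: Z q => [|Z IH] q /=; first by rewrite muln0.
rewrite size_cat /znu /zdelta /=.
case: eqP => hq /=.
  have := IH ord0; rewrite /=; lia.
have := IH (inord q.+1); rewrite zinc; [lia | by apply/eqP].
Qed.
End Zero.



Definition tdelta (q : 'I_2) (b : bool) : 'I_2 :=
  if nat_of_ord q == 0 then (if b then ord0 else ord_max) else ord0.
Definition tnu (x : seq bool) (q : 'I_2) (b : bool) : seq bool :=
  if nat_of_ord q == 0 then (if b then x else [::]) else [:: b].
Definition TX x := @mkFST 1 ord0 tdelta (tnu x).
Definition encw (w : seq bool) := flatten [seq [:: false; b] | b <- w].

Lemma TX_out x w M : fst_out (TX x) (encw w ++ nseq M true) = w ++ flatten (nseq M x).
Proof.
rewrite /fst_out /=.
elim: w => [|b w IH] /=.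
  by elim: M => [|M IH] //=; rewrite IH.
by rewrite IH.
Qed.

Lemma encw_size w M : size (encw w ++ nseq M true) = 2 * size w + M.
Proof.
rewrite size_cat size_nseq; congr (_ + _).
elim: w => [|b w IH] //; rewrite /encw /= -/(encw w) IH; lia.
Qed.

Definition tns (q : 'I_2) (b : bool) : nat := if nat_of_ord q == 0 then 1 else 2.

Definition descTX x := dbl (bin 1) ++ [:: false; true] ++
  flatten [seq @enc_entry (TX x) tns q b | q <- enum 'I_2, b <- [:: false; true]].

Lemma TX_le x : FST_le (size (descTX x)) (TX x).
Proof.
exists (descTX x); split => //; exists tns; split => //.
by move=> [[|[|q]] hq] b //=; case: b.
Qed.

Lemma min_ex (P : nat -> Prop) n : P n -> exists m, P m /\ forall k, P k -> m <= k.
Proof.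
move=> hP; apply: NNPP => hno.
have : forall n0 k, k <= n0 -> ~ P k.
  elim=> [|n0 IH] k hk Pk.
    by apply: hno; exists k; split => // k' _; lia.
  case: (leqP k n0) => h; first exact: IH h Pk.
  apply: hno; exists k; split => // k' Pk'.
  case: (leqP k k') => // h'; exfalso; apply: (IH k' _ Pk'); lia.
by move/(_ n n (leqnn n)).
Qed.

Lemma size_flatten_nseq (x : seq bool) M : size (flatten (nseq M x)) = M * size x.
Proof. elim: M => [|M IH] //=; rewrite size_cat IH; lia. Qed.

Lemma INR_muln m n : INR (m * n) = Rmult (INR m) (INR n).
Proof. exact: mult_INR. Qed.
Lemma INR_addn m n : INR (m + n) = Rplus (INR m) (INR n).
Proof. exact: plus_INR. Qed.

Definition kap s := s - Nat.sqrt s * Nat.sqrt s.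
Definition Mof (w : seq bool) := 2 * (size w).+1.
Fixpoint pre s : seq bool :=
  match s with
  | 0 => [::]
  | s'.+1 => let u := pre s' ++ flatten (nseq (Mof (pre s')) (xk (kap s'))) in
             u ++ nseq (s'.+1 * (size u).+1) false
  end.
Definition ustage s := pre s ++ flatten (nseq (Mof (pre s)) (xk (kap s))).
Lemma preS s : pre s.+1 = ustage s ++ nseq (s.+1 * (size (ustage s)).+1) false.
Proof. by []. Qed.

Lemma pre_size s : s <= size (pre s).
Proof. case: s => [|s] //; rewrite preS size_cat size_nseq; lia. Qed.

Lemma pre_prefix s t : s <= t -> exists e, pre t = pre s ++ e.
Proof.
elim: t => [|t IH]; first by rewrite leqn0 => /eqP ->; exists [::].
rewrite leq_eqVlt => /orP [/eqP ->|h]; first by exists [::]; rewrite cats0.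
have [e he] := IH h; rewrite preS /ustage he; eexists; rewrite -!catA; reflexivity.
Qed.

Definition Sq (i : nat) : bool := nth false (pre i.+1) i.

Lemma prefix_S n s : n <= size (pre s) -> Defs.prefix Sq n = take n (pre s).
Proof.
move=> hn; apply: (@eq_from_nth _ false).
  by rewrite size_mkseq size_take; case: ifP; lia.
move=> i; rewrite size_mkseq => hi.
rewrite nth_mkseq // nth_take // /Sq.
case: (leqP i.+1 s) => h.
  have [e ->] := pre_prefix h; rewrite nth_cat; have := pre_size i.+1; case: ifP => //; lia.
have [e ->] := pre_prefix (ltnW h); rewrite nth_cat; case: ifP => //; lia.
Qed.

Lemma sqrt_lemma j k : k <= 2 * j -> Nat.sqrt (j * j + k) = j.
Proof. move=> h; apply: Nat.sqrt_unique; lia. Qed.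

Theorem mainTheorem8 : exists S : nat -> bool, FS_deep S /\ ~ LZ_deep S.
Proof.
exists Sq; split.
- exists (Rinv 8); split; first by apply: Rinv_0_lt_compat; lra.
  move=> k; exists (size (descTX (xk k))) => N.
  set s := (N + k) * (N + k) + k.
  have hk : kap s = k by rewrite /kap /s sqrt_lemma; lia.
  set u := ustage s.
  exists (size u); split.
    have hs : N <= s by rewrite /s; nia.
    have := pre_size s; rewrite /u /ustage size_cat; lia.
  have hpre : Defs.prefix Sq (size u) = u.
    rewrite (@prefix_S _ s.+1); first by rewrite preS take_size_cat.
    by rewrite preS size_cat leq_addr.
  rewrite hpre.
  set w := pre s. set M := Mof w. set x := xk k.
  have hu : u = w ++ flatten (nseq M x) by rewrite /u /ustage hk.
  set P := (fun d => exists T y, FST_le (size (descTX x)) T /\ fst_out T y = u /\ size y = d).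
  have hw : P (2 * size w + M).
    exists (TX x), (encw w ++ nseq M true); split; first exact: TX_le.
    by rewrite hu TX_out encw_size.
  have [d' [hd' hmin]] := min_ex hw.
  have hd'le := hmin _ hw.
  exists d'; split.
    split => // T y hT hy; apply: hmin; by exists T, y.
  move=> d [[T [y [hT [hy hsy]]]] _].
  have hH : 4 <= hardH k by rewrite /hardH; lia.
  have hsx : size x = (hardH k).*2 by have [-> _] := xk_prop k.
  have hlow : M * hardH k <= size y.
    apply: (@hard_lower T x (hardH k) (xk_hard _) M (fst_start T) y w [::] [::] y) => //.
      by move: hy; rewrite /fst_out hu cats0.
  have hn : size u = size w + M * (hardH k).*2 by rewrite hu size_cat size_flatten_nseq hsx.
  have hM : M = 2 * (size w).+1 by [].
  have h4 : 4 * M <= M * hardH k by rewrite mulnC leq_mul2l hH orbT.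
  have key : size u + 8 * d' <= 8 * d by rewrite -hsy; lia.
  have := le_INR _ _ (elimT leP key); rewrite !INR_addn /=.
  move=> hR; lra.
- move=> [a [ha hC]].
  have ha2 : Rlt 0 (Rmult a (Rinv 2)) by lra.
  have [m [hm hm0]] := archimed_cor1 _ ha2.
  move/ltP: hm0 => hm0.
  set p := m.-1.
  have em : m = p.+1 by rewrite /p; lia.
  have [N hN] := hC (zC p) (@zIL p).
  set s := N + 2 * m.
  set n := size (pre s.+1).
  have hsn : s.+1 <= n by exact: pre_size.
  have hNn : N <= n by rewrite /s in hsn; lia.
  have := hN n hNn.
  rewrite (@prefix_S _ s.+1) // take_size.
  have bound : m * size (fst_out (zC p) (pre s.+1)) <= 2 * n.
    rewrite /n preS /fst_out out_cat size_cat size_cat size_nseq.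
    set u := ustage s.
    have b1 := @Zb1 p u ord0.
    set q := @fst_state_from (zC p) ord0 u.
    have b2 := @Zb2 p (s.+1 * (size u).+1) q.
    have hq := ltn_ord q.
    have hz : (2 * m) * (size u).+1 <= s.+1 * (size u).+1 by apply: leq_mul => //; rewrite /s; lia.
    have hA : m * size (@fst_out_from (zC p) ord0 u) <= m * (2 * size u).
      by rewrite leq_mul2l; apply/orP; right; move: b1; rewrite /=; lia.
    rewrite em in hA hz *; rewrite mulnDr; simpl fst_n in hq; apply: leq_trans (leq_add hA b2) _; lia.
  have hb := le_INR _ _ (elimT leP bound); rewrite !INR_muln in hb.
  have hLZ := pos_INR (size (LZ (pre s.+1))).
  have hm0' : Rlt 0 (INR m) by apply: lt_0_INR; apply/ltP.
  have hn0 : Rlt 0 (INR n) by apply: lt_0_INR; apply/ltP; lia.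
  set c := INR (size (fst_out (zC p) (pre s.+1))) in hb *.
  move=> hR.
  have h2 : Rlt 2 (Rmult a (INR m)).
    have := Rmult_lt_compat_r (INR m) _ _ hm0' hm.
    rewrite Rinv_l; last by apply: not_0_INR; lia.
    lra.
  have h3 := Rmult_lt_compat_r (INR n) _ _ hn0 h2.
  have h5 : Rle (Rmult a (INR n)) c by lra.
  have h6 := Rmult_le_compat_r (INR m) _ _ (Rlt_le _ _ hm0') h5.
  simpl INR in hb; lra.
Qed.
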